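(* Let $r=a/b$ with $a,b$ coprime positive integers. Then $I_r$ intertwines the left sub-Laplacian $\mathcal L$ with $\square_r=\mathcal L+rT^2$: $$I_r(\mathcal Lf)=\square_r(I_rf),\qquad f\in S(\overline{\mathbb{H}}).$$
   Context: $\mathbb{H}=\mathbb{C}\times\mathbb{R}$ (coordinates $z=x+iy$, $t$) with product $(x+iy,t)(u+iv,s)=(x+u+i(y+v),\,t+s+\tfrac12(xv-yu))$; $\overline{\mathbb{H}}=\mathbb{H}/\{(0,k\pi):k\in\mathbb{Z}\}\cong\mathbb{C}\times(\mathbb{R}/\pi\mathbb{Z})$, $S(\overline{\mathbb{H}})$ its Schwartz functions. For $r=a/b$, $\gamma_r(s)=(\sqrt r e^{is/\sqrt r},\tfrac12\sqrt r s)$ and $I_rf(z,t)=\int_0^{2\pi\sqrt{ab}}f((z,t)\gamma_r(s))\,ds$. The left-invariant vector fields are $X=\partial_x-\tfrac12y\partial_t$, $Y=\partial_y+\tfrac12x\partial_t$, $T=\partial_t$, and the left sub-Laplacian is $\mathcal L=-(X^2+Y^2)$. *)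

(* Defs.v *)
From Stdlib Require Import Reals Lra Arith List.
From Coquelicot Require Import Coquelicot.
Open Scope R_scope.

(* Functions on H = C x R are written in coordinates (x, y, t), z = x + i y,
   complex valued. *)
Definition fun3 := R -> R -> R -> C.

Definition CDerive (h : R -> C) (u : R) : C :=
  (Derive (fun v => fst (h v)) u, Derive (fun v => snd (h v)) u).
Definition ex_CDerive (h : R -> C) (u : R) : Prop :=
  ex_derive (fun v => fst (h v)) u /\ ex_derive (fun v => snd (h v)) u.

Definition CRInt (h : R -> C) (a b : R) : C :=
  (RInt (fun v => fst (h v)) a b, RInt (fun v => snd (h v)) a b).

Inductive dir := Dx | Dy | Dt.

Definition pd (d : dir) (f : fun3) : fun3 := fun x y t =>
  match d with
  | Dx => CDerive (fun u => f u y t) x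
  | Dy => CDerive (fun u => f x u t) y
  | Dt => CDerive (fun u => f x y u) t
  end.

Definition ex_pd (d : dir) (f : fun3) (x y t : R) : Prop :=
  match d with
  | Dx => ex_CDerive (fun u => f u y t) x
  | Dy => ex_CDerive (fun u => f x u t) y
  | Dt => ex_CDerive (fun u => f x y u) t
  end.

Definition Dw (w : list dir) (f : fun3) : fun3 := fold_right pd f w.

Definition cont3 (f : fun3) : Prop :=
  forall x y t eps, 0 < eps -> exists delta, 0 < delta /\
    forall x' y' t', Rabs (x' - x) < delta -> Rabs (y' - y) < delta ->
      Rabs (t' - t) < delta -> Cmod (Cminus (f x' y' t') (f x y t)) < eps.

Definition smooth3 (f : fun3) : Prop :=
  forall w : list dir, cont3 (Dw w f) /\
    forall d x y t, ex_pd d (Dw w f) x y t.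

(* Functions on Hbar = H / {(0, k pi)}: pi-periodic in t. *)
Definition periodic_t (f : fun3) : Prop :=
  forall x y t, f x y (t + PI) = f x y t.

(* Schwartz class S(Hbar): smooth, pi-periodic in t, and every derivative
   decays faster than any power of |z| (uniformly in t, which ranges over
   the compact circle R / pi Z). *)
Definition Schwartz_Hbar (f : fun3) : Prop :=
  smooth3 f /\ periodic_t f /\
  forall (w : list dir) (N : nat), exists M : R, forall x y t,
    (1 + x ^ 2 + y ^ 2) ^ N * Cmod (Dw w f x y t) <= M.

Definition Xop (f : fun3) : fun3 := fun x y t =>
  Cminus (pd Dx f x y t) (Cmult (RtoC (y / 2)) (pd Dt f x y t)).
Definition Yop (f : fun3) : fun3 := fun x y t =>
  Cplus (pd Dy f x y t) (Cmult (RtoC (x / 2)) (pd Dt f x y t)).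
Definition Top (f : fun3) : fun3 := pd Dt f.

Definition subLap (f : fun3) : fun3 := fun x y t =>
  Copp (Cplus (Xop (Xop f) x y t) (Yop (Yop f) x y t)).

Definition box (r : R) (f : fun3) : fun3 := fun x y t =>
  Cplus (subLap f x y t) (Cmult (RtoC r) (Top (Top f) x y t)).

(* Heisenberg product (x+iy,t)(u+iv,s) = (x+u + i(y+v), t+s+1/2(xv-yu)),
   evaluated as f at the product. *)
Definition f_at_prod (f : fun3) (x y t u v s : R) : C :=
  f (x + u) (y + v) (t + s + / 2 * (x * v - y * u)).

Definition gamma_x (r s : R) : R := sqrt r * cos (s / sqrt r).
Definition gamma_y (r s : R) : R := sqrt r * sin (s / sqrt r).
Definition gamma_t (r s : R) : R := / 2 * sqrt r * s.

Definition I_op (a b : nat) (f : fun3) : fun3 := fun x y t =>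
  let r := INR a / INR b in
  CRInt (fun s => f_at_prod f x y t (gamma_x r s) (gamma_y r s) (gamma_t r s))
        0 (2 * PI * sqrt (INR a * INR b)).

(* Main.v *)
Require Import Defs.
From Stdlib Require Import Reals Arith.
From Coquelicot Require Import Coquelicot.
Open Scope R_scope.
From Stdlib Require Import Lra Lia List.
Import Defs.

Definition r3 := R -> R -> R -> R.
Definition rpd (d : dir) (phi : r3) : r3 := fun x y t =>
  match d with
  | Dx => Derive (fun u => phi u y t) x
  | Dy => Derive (fun u => phi x u t) y
  | Dt => Derive (fun u => phi x y u) t
  end.
Definition ex_rpd (d : dir) (phi : r3) (x y t : R) : Prop :=
  match d with
  | Dx => ex_derive (fun u => phi u y t) x
  | Dy => ex_derive (fun u => phi x u t) y
  | Dt => ex_derive (fun u => phi x y u) t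
  end.
Definition cont3r (phi : r3) : Prop :=
  forall x y t eps, 0 < eps -> exists delta, 0 < delta /\
    forall x' y' t', Rabs (x' - x) < delta -> Rabs (y' - y) < delta ->
      Rabs (t' - t) < delta -> Rabs (phi x' y' t' - phi x y t) < eps.
Definition C1 (phi : r3) : Prop :=
  cont3r phi /\ (forall d, cont3r (rpd d phi)) /\ (forall d x y t, ex_rpd d phi x y t).

Lemma mvt_piece (g : R -> R) (a0 a : R) :
  (forall u, ex_derive g u) ->
  exists xi, Rabs (xi - a0) <= Rabs (a - a0) /\ g a - g a0 = Derive g xi * (a - a0).
Proof.
  intros Hg.
  destruct (MVT_gen g a0 a (Derive g)) as [c [Hc Heq]].
  - intros x _. apply Derive_correct, Hg.
  - intros x _. apply continuity_pt_filterlim. apply (ex_derive_continuous (K := R_AbsRing) (V := R_NormedModule)), Hg.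
  - exists c. split; [|exact Heq].
    revert Hc. unfold Rmin, Rmax. destruct (Rle_dec a0 a); intros Hc;
    unfold Rabs; repeat destruct Rcase_abs; lra.
Qed.

Lemma abs_mul_le (p q e : R) : Rabs p <= e -> Rabs (p * q) <= e * Rabs q.
Proof. intros H. rewrite Rabs_mult. apply Rmult_le_compat_r; [apply Rabs_pos|exact H]. Qed.

Lemma frechet (phi : r3) : C1 phi -> forall a0 b0 c0 eps, 0 < eps ->
  exists delta, 0 < delta /\ forall a b c, Rabs (a - a0) < delta -> Rabs (b - b0) < delta ->
    Rabs (c - c0) < delta ->
    Rabs (phi a b c - phi a0 b0 c0 - (rpd Dx phi a0 b0 c0 * (a - a0) +
      rpd Dy phi a0 b0 c0 * (b - b0) + rpd Dt phi a0 b0 c0 * (c - c0)))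
    <= eps * (Rabs (a - a0) + Rabs (b - b0) + Rabs (c - c0)).
Proof.
  intros [H0 [Hd He]] a0 b0 c0 eps Heps.
  destruct (Hd Dx a0 b0 c0 eps Heps) as [d1 [Hd1 H1]].
  destruct (Hd Dy a0 b0 c0 eps Heps) as [d2 [Hd2 H2]].
  destruct (Hd Dt a0 b0 c0 eps Heps) as [d3 [Hd3 H3]].
  exists (Rmin d1 (Rmin d2 d3)). split.
  { apply Rmin_pos; [lra|apply Rmin_pos; lra]. }
  intros a b c Ha Hb Hc.
  assert (m1 := Rmin_l d1 (Rmin d2 d3)).
  assert (m2 := Rmin_r d1 (Rmin d2 d3)).
  assert (m3 := Rmin_l d2 d3). assert (m4 := Rmin_r d2 d3).
  destruct (mvt_piece (fun u => phi u b c) a0 a) as [x1 [Hx1 E1]].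
  { intros u. exact (He Dx u b c). }
  destruct (mvt_piece (fun u => phi a0 u c) b0 b) as [x2 [Hx2 E2]].
  { intros u. exact (He Dy a0 u c). }
  destruct (mvt_piece (fun u => phi a0 b0 u) c0 c) as [x3 [Hx3 E3]].
  { intros u. exact (He Dt a0 b0 u). }
  simpl in E1, E2, E3.
  assert (B1 : Rabs (rpd Dx phi x1 b c - rpd Dx phi a0 b0 c0) <= eps).
  { left. apply H1; lra. }
  assert (B2 : Rabs (rpd Dy phi a0 x2 c - rpd Dy phi a0 b0 c0) <= eps).
  { left. apply H2; try lra. rewrite Rminus_diag, Rabs_R0; lra. }
  assert (B3 : Rabs (rpd Dt phi a0 b0 x3 - rpd Dt phi a0 b0 c0) <= eps).
  { left. apply H3; try lra; rewrite Rminus_diag, Rabs_R0; lra. }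
  replace (phi a b c - phi a0 b0 c0 - (rpd Dx phi a0 b0 c0 * (a - a0) +
      rpd Dy phi a0 b0 c0 * (b - b0) + rpd Dt phi a0 b0 c0 * (c - c0)))
    with ((rpd Dx phi x1 b c - rpd Dx phi a0 b0 c0) * (a - a0) +
          (rpd Dy phi a0 x2 c - rpd Dy phi a0 b0 c0) * (b - b0) +
          (rpd Dt phi a0 b0 x3 - rpd Dt phi a0 b0 c0) * (c - c0)).
  2:{ simpl. 
      replace (phi a b c - phi a0 b0 c0) with
        ((phi a b c - phi a0 b c) + (phi a0 b c - phi a0 b0 c) + (phi a0 b0 c - phi a0 b0 c0)) by ring.
      rewrite E1, E2, E3. ring. }
  eapply Rle_trans; [apply Rabs_triang|].
  eapply Rle_trans; [apply Rplus_le_compat_r, Rabs_triang|].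
  assert (T1 := abs_mul_le _ (a - a0) _ B1).
  assert (T2 := abs_mul_le _ (b - b0) _ B2).
  assert (T3 := abs_mul_le _ (c - c0) _ B3).
  lra.
Qed.


Lemma chain3 (phi : r3) (a b c : R -> R) (s0 da db dc : R) :
  C1 phi -> is_derive a s0 da -> is_derive b s0 db -> is_derive c s0 dc ->
  is_derive (fun s => phi (a s) (b s) (c s)) s0
    (rpd Dx phi (a s0) (b s0) (c s0) * da + rpd Dy phi (a s0) (b s0) (c s0) * db
     + rpd Dt phi (a s0) (b s0) (c s0) * dc).
Proof.
  intros HC Ha Hb Hc.
  apply is_derive_Reals in Ha, Hb, Hc. apply is_derive_Reals.
  intros eps Heps.
  set (Px := rpd Dx phi (a s0) (b s0) (c s0)).
  set (Py := rpd Dy phi (a s0) (b s0) (c s0)).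
  set (Pt := rpd Dt phi (a s0) (b s0) (c s0)).
  set (M := Rabs Px + Rabs Py + Rabs Pt).
  set (Ds := Rabs da + Rabs db + Rabs dc).
  assert (HM : 0 <= M) by (unfold M; generalize (Rabs_pos Px) (Rabs_pos Py) (Rabs_pos Pt); lra).
  assert (HDs : 0 <= Ds) by (unfold Ds; generalize (Rabs_pos da) (Rabs_pos db) (Rabs_pos dc); lra).
  set (e2 := Rmin 1 (eps / (2 * (M + 1)))).
  assert (He2 : 0 < e2).
  { apply Rmin_pos; [lra|]. apply Rdiv_lt_0_compat; lra. }
  assert (He2a : e2 <= 1) by apply Rmin_l.
  assert (He2b : e2 <= eps / (2 * (M + 1))) by apply Rmin_r.
  set (e1 := eps / (2 * (Ds + 3))).
  assert (He1 : 0 < e1) by (apply Rdiv_lt_0_compat; lra).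
  destruct (frechet phi HC (a s0) (b s0) (c s0) e1 He1) as [df [Hdf Hf]].
  destruct (Ha e2 He2) as [da' Hda]. destruct (Hb e2 He2) as [db' Hdb].
  destruct (Hc e2 He2) as [dc' Hdc].
  assert (Hdd : 0 < df / (Ds + 1)) by (apply Rdiv_lt_0_compat; lra).
  exists (mkposreal _ (Rmin_pos _ _ (cond_pos da') (Rmin_pos _ _ (cond_pos db')
     (Rmin_pos _ _ (cond_pos dc') Hdd)))).
  intros h Hh0 Hh. simpl in Hh.
  assert (Hh1 := Rlt_le_trans _ _ _ Hh (Rmin_l da' _)).
  assert (Hh2' := Rlt_le_trans _ _ _ Hh (Rmin_r da' _)).
  assert (Hh2 := Rlt_le_trans _ _ _ Hh2' (Rmin_l db' _)).
  assert (Hh3' := Rlt_le_trans _ _ _ Hh2' (Rmin_r db' _)).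
  assert (Hh3 := Rlt_le_trans _ _ _ Hh3' (Rmin_l dc' _)).
  assert (Hh4 := Rlt_le_trans _ _ _ Hh3' (Rmin_r dc' _)).
  specialize (Hda h Hh0 Hh1). specialize (Hdb h Hh0 Hh2). specialize (Hdc h Hh0 Hh3).
  set (qa := (a (s0 + h) - a s0) / h) in *.
  set (qb := (b (s0 + h) - b s0) / h) in *.
  set (qc := (c (s0 + h) - c s0) / h) in *.
  assert (Ea : a (s0 + h) - a s0 = qa * h) by (unfold qa; field; exact Hh0).
  assert (Eb : b (s0 + h) - b s0 = qb * h) by (unfold qb; field; exact Hh0).
  assert (Ec : c (s0 + h) - c s0 = qc * h) by (unfold qc; field; exact Hh0).
  assert (Habsh : 0 < Rabs h) by (apply Rabs_pos_lt; exact Hh0).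
  assert (Bqa : Rabs qa <= Rabs da + 1).
  { replace qa with ((qa - da) + da) by ring. eapply Rle_trans; [apply Rabs_triang|]. lra. }
  assert (Bqb : Rabs qb <= Rabs db + 1).
  { replace qb with ((qb - db) + db) by ring. eapply Rle_trans; [apply Rabs_triang|]. lra. }
  assert (Bqc : Rabs qc <= Rabs dc + 1).
  { replace qc with ((qc - dc) + dc) by ring. eapply Rle_trans; [apply Rabs_triang|]. lra. }
  assert (Hhd : Rabs h * (Ds + 1) < df).
  { apply (Rmult_lt_compat_r (Ds + 1)) in Hh4; [|lra].
    unfold Rdiv in Hh4. rewrite Rmult_assoc, Rinv_l in Hh4; lra. }
  assert (Aa : Rabs (a (s0 + h) - a s0) <= (Rabs da + 1) * Rabs h).
  { rewrite Ea, Rabs_mult. apply Rmult_le_compat_r; [apply Rabs_pos|exact Bqa]. }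
  assert (Ab : Rabs (b (s0 + h) - b s0) <= (Rabs db + 1) * Rabs h).
  { rewrite Eb, Rabs_mult. apply Rmult_le_compat_r; [apply Rabs_pos|exact Bqb]. }
  assert (Ac : Rabs (c (s0 + h) - c s0) <= (Rabs dc + 1) * Rabs h).
  { rewrite Ec, Rabs_mult. apply Rmult_le_compat_r; [apply Rabs_pos|exact Bqc]. }
  assert (Hsum : (Rabs da + 1) * Rabs h + (Rabs db + 1) * Rabs h + (Rabs dc + 1) * Rabs h
           = (Ds + 3) * Rabs h) by (unfold Ds; ring).
  assert (Hle1 : (Rabs da + 1) * Rabs h <= (Ds + 1) * Rabs h).
  { apply Rmult_le_compat_r; [apply Rabs_pos|]. unfold Ds; generalize (Rabs_pos db) (Rabs_pos dc); lra. }
  assert (Hle2 : (Rabs db + 1) * Rabs h <= (Ds + 1) * Rabs h).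
  { apply Rmult_le_compat_r; [apply Rabs_pos|]. unfold Ds; generalize (Rabs_pos da) (Rabs_pos dc); lra. }
  assert (Hle3 : (Rabs dc + 1) * Rabs h <= (Ds + 1) * Rabs h).
  { apply Rmult_le_compat_r; [apply Rabs_pos|]. unfold Ds; generalize (Rabs_pos db) (Rabs_pos da); lra. }
  specialize (Hf (a (s0 + h)) (b (s0 + h)) (c (s0 + h))).
  assert (Hf' : Rabs (phi (a (s0 + h)) (b (s0 + h)) (c (s0 + h)) - phi (a s0) (b s0) (c s0) -
           (Px * (a (s0 + h) - a s0) + Py * (b (s0 + h) - b s0) + Pt * (c (s0 + h) - c s0)))
           <= e1 * ((Ds + 3) * Rabs h)).
  { eapply Rle_trans; [apply Hf; lra|].
    apply Rmult_le_compat_l; lra. }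
  set (Rm := phi (a (s0 + h)) (b (s0 + h)) (c (s0 + h)) - phi (a s0) (b s0) (c s0) -
           (Px * (a (s0 + h) - a s0) + Py * (b (s0 + h) - b s0) + Pt * (c (s0 + h) - c s0))) in *.
  replace ((phi (a (s0 + h)) (b (s0 + h)) (c (s0 + h)) - phi (a s0) (b s0) (c s0)) / h
     - (Px * da + Py * db + Pt * dc))
    with (Rm / h + (Px * (qa - da) + Py * (qb - db) + Pt * (qc - dc))).
  2:{ unfold Rm. rewrite Ea, Eb, Ec. field. exact Hh0. }
  assert (R1 : Rabs (Rm / h) <= eps / 2).
  { unfold Rdiv. rewrite Rabs_mult, Rabs_inv.
    apply (Rmult_le_reg_r (Rabs h)); [exact Habsh|].
    rewrite Rmult_assoc, Rinv_l by lra. rewrite Rmult_1_r.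
    eapply Rle_trans; [exact Hf'|]. unfold e1.
    right. field. lra. }
  assert (R2 : Rabs (Px * (qa - da) + Py * (qb - db) + Pt * (qc - dc)) <= M * e2).
  { eapply Rle_trans; [apply Rabs_triang|].
    eapply Rle_trans; [apply Rplus_le_compat_r, Rabs_triang|].
    rewrite !Rabs_mult. unfold M.
    assert (Rabs Px * Rabs (qa - da) <= Rabs Px * e2) by (apply Rmult_le_compat_l; [apply Rabs_pos|lra]).
    assert (Rabs Py * Rabs (qb - db) <= Rabs Py * e2) by (apply Rmult_le_compat_l; [apply Rabs_pos|lra]).
    assert (Rabs Pt * Rabs (qc - dc) <= Rabs Pt * e2) by (apply Rmult_le_compat_l; [apply Rabs_pos|lra]).
    lra. }
  assert (R3 : M * e2 < eps / 2).
  { apply Rle_lt_trans with (M * (eps / (2 * (M + 1)))).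
    - apply Rmult_le_compat_l; lra.
    - apply (Rmult_lt_reg_r (2 * (M + 1))); [lra|].
      replace (M * (eps / (2 * (M + 1))) * (2 * (M + 1))) with (M * eps) by (field; lra).
      nra. }
  eapply Rle_lt_trans; [apply Rabs_triang|]. lra.
Qed.


Lemma cont_comp2 (psi : r3) (p1 p2 p3 : R -> R -> R) (z s : R) :
  cont3r psi -> continuity_2d_pt p1 z s -> continuity_2d_pt p2 z s ->
  continuity_2d_pt p3 z s ->
  continuity_2d_pt (fun u v => psi (p1 u v) (p2 u v) (p3 u v)) z s.
Proof.
  intros Hpsi H1 H2 H3 eps.
  destruct (Hpsi (p1 z s) (p2 z s) (p3 z s) eps (cond_pos eps)) as [d [Hd Hp]].
  destruct (H1 (mkposreal d Hd)) as [d1 Hd1].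
  destruct (H2 (mkposreal d Hd)) as [d2 Hd2].
  destruct (H3 (mkposreal d Hd)) as [d3 Hd3].
  exists (mkposreal _ (Rmin_pos _ _ (cond_pos d1) (Rmin_pos _ _ (cond_pos d2) (cond_pos d3)))).
  simpl. intros u v Hu Hv.
  assert (A1 := Rlt_le_trans _ _ _ Hu (Rmin_l d1 _)).
  assert (A2 := Rlt_le_trans _ _ _ Hu (Rmin_r d1 _)).
  assert (A3 := Rlt_le_trans _ _ _ A2 (Rmin_l d2 _)).
  assert (A4 := Rlt_le_trans _ _ _ A2 (Rmin_r d2 _)).
  assert (B1 := Rlt_le_trans _ _ _ Hv (Rmin_l d1 _)).
  assert (B2 := Rlt_le_trans _ _ _ Hv (Rmin_r d1 _)).
  assert (B3 := Rlt_le_trans _ _ _ B2 (Rmin_l d2 _)).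
  assert (B4 := Rlt_le_trans _ _ _ B2 (Rmin_r d2 _)).
  apply Hp; [apply Hd1|apply Hd2|apply Hd3]; assumption.
Qed.

Lemma cont_v (U : R -> R) (z s : R) : continuity_pt U s ->
  continuity_2d_pt (fun _ v => U v) z s.
Proof.
  intros H. apply (continuity_1d_2d_pt_comp U (fun _ v => v)); [exact H|].
  apply continuity_2d_pt_id2.
Qed.

Lemma cont2d_1d (G : R -> R -> R) (z s : R) :
  continuity_2d_pt G z s -> continuous (fun v => G z v) s.
Proof.
  intros H. apply continuity_pt_filterlim.
  intros eps Heps. destruct (H (mkposreal eps Heps)) as [d Hd].
  exists d. split; [apply cond_pos|].
  intros x [_ Hx]. simpl in *. unfold R_dist in *.
  apply Hd; [rewrite Rminus_diag, Rabs_R0; apply cond_pos|exact Hx].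
Qed.

Ltac cont2d :=
  repeat first
    [ apply continuity_2d_pt_plus
    | apply continuity_2d_pt_minus
    | apply continuity_2d_pt_mult
    | apply continuity_2d_pt_opp
    | apply continuity_2d_pt_const
    | apply continuity_2d_pt_id1
    | apply continuity_2d_pt_id2
    | apply cont_v; solve [auto] ].

Lemma param_gen (F dF : R -> R -> R) (x L : R) :
  (forall z s, is_derive (fun z' => F z' s) z (dF z s)) ->
  (forall z s, continuity_2d_pt dF z s) ->
  (forall z s, continuity_2d_pt F z s) ->
  is_derive (fun z => RInt (F z) 0 L) x (RInt (dF x) 0 L).
Proof.
  intros HD HdC HC.
  assert (E : RInt (dF x) 0 L = RInt (fun s => Derive (fun u => F u s) x) 0 L).
  { apply RInt_ext. intros s _. symmetry. apply is_derive_unique, HD. }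
  rewrite E.
  apply (is_derive_RInt_param F 0 L x).
  - apply filter_forall. intros z s _. eexists. apply HD.
  - intros s _. apply (continuity_2d_pt_ext dF).
    + intros u v. symmetry. apply is_derive_unique, HD.
    + apply HdC.
  - apply filter_forall. intros z. apply (ex_RInt_continuous (V := R_CompleteNormedModule)).
    intros s _. apply (cont2d_1d F), HC.
Qed.

Definition Aint (U V W : R -> R) (L : R) (c : R -> R) (phi : r3) (x y t : R) : R :=
  RInt (fun s => c s * phi (x + U s) (y + V s) (t + W s + /2 * (x * V s - y * U s))) 0 L.

Lemma ex_RInt_A (U V W : R -> R) (L : R) (c : R -> R) (phi : r3) (x y t : R) :
  (forall s, continuity_pt U s) -> (forall s, continuity_pt V s) ->
  (forall s, continuity_pt W s) -> (forall s, continuity_pt c s) ->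
  cont3r phi ->
  ex_RInt (fun s => c s * phi (x + U s) (y + V s) (t + W s + /2 * (x * V s - y * U s))) 0 L.
Proof.
  intros HU HV HW Hc Hphi.
  apply (ex_RInt_continuous (V := R_CompleteNormedModule)). intros s _.
  apply (cont2d_1d (fun _ s => c s * phi (x + U s) (y + V s) (t + W s + /2 * (x * V s - y * U s))) 0).
  apply continuity_2d_pt_mult; [cont2d|].
  apply (cont_comp2 phi (fun _ s => x + U s) (fun _ s => y + V s)
     (fun _ s => t + W s + /2 * (x * V s - y * U s))); auto; cont2d.
Qed.


Lemma cont1_from2 (G : R -> R -> R) (s : R) :
  continuity_2d_pt (fun _ v => G 0 v) 0 s -> continuity_pt (G 0) s.
Proof.
  intros H. apply continuity_pt_filterlim. exact (cont2d_1d _ 0 s H).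
Qed.

Lemma RInt_plusR (f g : R -> R) (a b : R) :
  ex_RInt f a b -> ex_RInt g a b ->
  RInt (fun x => f x + g x) a b = RInt f a b + RInt g a b.
Proof. intros Hf Hg. exact (RInt_plus (V := R_CompleteNormedModule) f g a b Hf Hg). Qed.

Lemma RInt_scalR (f : R -> R) (a b k : R) :
  ex_RInt f a b -> RInt (fun x => k * f x) a b = k * RInt f a b.
Proof. intros Hf. exact (RInt_scal (V := R_CompleteNormedModule) f a b k Hf). Qed.

Lemma cont_pt_mul (f g : R -> R) (s : R) :
  continuity_pt f s -> continuity_pt g s -> continuity_pt (fun x => f x * g x) s.
Proof. intros Hf Hg. exact (continuity_pt_mult f g s Hf Hg). Qed.

Lemma cont_pt_const (k s : R) : continuity_pt (fun _ => k) s.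
Proof. apply continuity_pt_const. intros a b; reflexivity. Qed.


Lemma A_dx (U V W : R -> R) (L : R) (c : R -> R) (phi : r3) (x y t : R) :
  (forall s, continuity_pt U s) -> (forall s, continuity_pt V s) ->
  (forall s, continuity_pt W s) -> (forall s, continuity_pt c s) ->
  C1 phi ->
  is_derive (fun x' => Aint U V W L c phi x' y t) x
    (Aint U V W L c (rpd Dx phi) x y t +
     Aint U V W L (fun s => c s * (/2 * V s)) (rpd Dt phi) x y t).
Proof.
  intros HU HV HW Hc HC. pose proof HC as [H0 [Hd He]].
  set (F := fun z s => c s * phi (z + U s) (y + V s) (t + W s + /2 * (z * V s - y * U s))).
  set (dF := fun z s => c s * (rpd Dx phi (z + U s) (y + V s) (t + W s + /2 * (z * V s - y * U s)) * 1
     + rpd Dy phi (z + U s) (y + V s) (t + W s + /2 * (z * V s - y * U s)) * 0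
     + rpd Dt phi (z + U s) (y + V s) (t + W s + /2 * (z * V s - y * U s)) * (/2 * V s))).
  assert (HP := param_gen F dF x L).
  unfold Aint.
  replace (RInt (fun s => c s * rpd Dx phi (x + U s) (y + V s) (t + W s + / 2 * (x * V s - y * U s))) 0 L +
    RInt (fun s => c s * (/ 2 * V s) * rpd Dt phi (x + U s) (y + V s) (t + W s + / 2 * (x * V s - y * U s))) 0 L)
   with (RInt (dF x) 0 L).
  - apply HP.
    + intros z s. unfold F, dF. apply is_derive_scal.
      apply (chain3 phi (fun z' => z' + U s) (fun _ => y + V s)
               (fun z' => t + W s + /2 * (z' * V s - y * U s))); [exact HC| | |];
      auto_derive; try ring; auto.
    + intros z s. unfold dF. apply continuity_2d_pt_mult; [cont2d|].
      apply continuity_2d_pt_plus; [apply continuity_2d_pt_plus|];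
      (apply continuity_2d_pt_mult; [|cont2d]);
      (apply (cont_comp2 _ (fun z s => z + U s) (fun _ s => y + V s)
       (fun z s => t + W s + /2 * (z * V s - y * U s))); [auto| cont2d ..]).
    + intros z s. unfold F. apply continuity_2d_pt_mult; [cont2d|].
      apply (cont_comp2 _ (fun z s => z + U s) (fun _ s => y + V s)
       (fun z s => t + W s + /2 * (z * V s - y * U s))); [auto| cont2d ..].
  - assert (E1 := ex_RInt_A U V W L c (rpd Dx phi) x y t HU HV HW Hc (Hd Dx)).
    assert (E2 : ex_RInt (fun s => c s * (/ 2 * V s) * rpd Dt phi (x + U s) (y + V s) (t + W s + / 2 * (x * V s - y * U s))) 0 L).
    { apply ex_RInt_A; auto.
      intros s. apply (cont1_from2 (fun _ s => c s * (/2 * V s))). cont2d. }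
    rewrite <- (RInt_plusR _ _ _ _ E1 E2).
    apply RInt_ext. intros s _. unfold dF. match goal with |- @eq _ ?a ?b => change (@eq R a b) end. ring.
Qed.

Lemma A_dy (U V W : R -> R) (L : R) (c : R -> R) (phi : r3) (x y t : R) :
  (forall s, continuity_pt U s) -> (forall s, continuity_pt V s) ->
  (forall s, continuity_pt W s) -> (forall s, continuity_pt c s) ->
  C1 phi ->
  is_derive (fun y' => Aint U V W L c phi x y' t) y
    (Aint U V W L c (rpd Dy phi) x y t +
     Aint U V W L (fun s => c s * (-/2 * U s)) (rpd Dt phi) x y t).
Proof.
  intros HU HV HW Hc HC. pose proof HC as [H0 [Hd He]].
  set (F := fun z s => c s * phi (x + U s) (z + V s) (t + W s + /2 * (x * V s - z * U s))).
  set (dF := fun z s => c s * (rpd Dx phi (x + U s) (z + V s) (t + W s + /2 * (x * V s - z * U s)) * 0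
     + rpd Dy phi (x + U s) (z + V s) (t + W s + /2 * (x * V s - z * U s)) * 1
     + rpd Dt phi (x + U s) (z + V s) (t + W s + /2 * (x * V s - z * U s)) * (-/2 * U s))).
  assert (HP := param_gen F dF y L).
  unfold Aint.
  replace (RInt (fun s => c s * rpd Dy phi (x + U s) (y + V s) (t + W s + / 2 * (x * V s - y * U s))) 0 L +
    RInt (fun s => c s * (- / 2 * U s) * rpd Dt phi (x + U s) (y + V s) (t + W s + / 2 * (x * V s - y * U s))) 0 L)
   with (RInt (dF y) 0 L).
  - apply HP.
    + intros z s. unfold F, dF. apply is_derive_scal.
      apply (chain3 phi (fun _ => x + U s) (fun z' => z' + V s)
               (fun z' => t + W s + /2 * (x * V s - z' * U s))); [exact HC| | |];
      auto_derive; try ring; auto.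
    + intros z s. unfold dF. apply continuity_2d_pt_mult; [cont2d|].
      apply continuity_2d_pt_plus; [apply continuity_2d_pt_plus|];
      (apply continuity_2d_pt_mult; [|cont2d]);
      (apply (cont_comp2 _ (fun _ s => x + U s) (fun z s => z + V s)
       (fun z s => t + W s + /2 * (x * V s - z * U s))); [auto| cont2d ..]).
    + intros z s. unfold F. apply continuity_2d_pt_mult; [cont2d|].
      apply (cont_comp2 _ (fun _ s => x + U s) (fun z s => z + V s)
       (fun z s => t + W s + /2 * (x * V s - z * U s))); [auto| cont2d ..].
  - assert (E1 := ex_RInt_A U V W L c (rpd Dy phi) x y t HU HV HW Hc (Hd Dy)).
    assert (E2 : ex_RInt (fun s => c s * (- / 2 * U s) * rpd Dt phi (x + U s) (y + V s) (t + W s + / 2 * (x * V s - y * U s))) 0 L).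
    { apply ex_RInt_A; auto.
      intros s. apply (cont1_from2 (fun _ s => c s * (-/2 * U s))). cont2d. }
    rewrite <- (RInt_plusR _ _ _ _ E1 E2).
    apply RInt_ext. intros s _. unfold dF. match goal with |- @eq _ ?a ?b => change (@eq R a b) end. ring.
Qed.

Lemma A_dt (U V W : R -> R) (L : R) (c : R -> R) (phi : r3) (x y t : R) :
  (forall s, continuity_pt U s) -> (forall s, continuity_pt V s) ->
  (forall s, continuity_pt W s) -> (forall s, continuity_pt c s) ->
  C1 phi ->
  is_derive (fun t' => Aint U V W L c phi x y t') t
    (Aint U V W L c (rpd Dt phi) x y t).
Proof.
  intros HU HV HW Hc HC. pose proof HC as [H0 [Hd He]].
  set (F := fun z s => c s * phi (x + U s) (y + V s) (z + W s + /2 * (x * V s - y * U s))).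
  set (dF := fun z s => c s * (rpd Dx phi (x + U s) (y + V s) (z + W s + /2 * (x * V s - y * U s)) * 0
     + rpd Dy phi (x + U s) (y + V s) (z + W s + /2 * (x * V s - y * U s)) * 0
     + rpd Dt phi (x + U s) (y + V s) (z + W s + /2 * (x * V s - y * U s)) * 1)).
  assert (HP := param_gen F dF t L).
  unfold Aint.
  replace (RInt (fun s => c s * rpd Dt phi (x + U s) (y + V s) (t + W s + / 2 * (x * V s - y * U s))) 0 L)
   with (RInt (dF t) 0 L).
  - apply HP.
    + intros z s. unfold F, dF. apply is_derive_scal.
      apply (chain3 phi (fun _ => x + U s) (fun _ => y + V s)
               (fun z' => z' + W s + /2 * (x * V s - y * U s))); [exact HC| | |];
      auto_derive; try ring; auto.
    + intros z s. unfold dF. apply continuity_2d_pt_mult; [cont2d|].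
      apply continuity_2d_pt_plus; [apply continuity_2d_pt_plus|];
      (apply continuity_2d_pt_mult; [|cont2d]);
      (apply (cont_comp2 _ (fun _ s => x + U s) (fun _ s => y + V s)
       (fun z s => z + W s + /2 * (x * V s - y * U s))); [auto| cont2d ..]).
    + intros z s. unfold F. apply continuity_2d_pt_mult; [cont2d|].
      apply (cont_comp2 _ (fun _ s => x + U s) (fun _ s => y + V s)
       (fun z s => z + W s + /2 * (x * V s - y * U s))); [auto| cont2d ..].
  - apply RInt_ext. intros s _. unfold dF. match goal with |- @eq _ ?a ?b => change (@eq R a b) end. ring.
Qed.


Definition is_rpd (d : dir) (phi : r3) (x y t l : R) : Prop :=
  match d with
  | Dx => is_derive (fun u => phi u y t) x l
  | Dy => is_derive (fun u => phi x u t) y l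
  | Dt => is_derive (fun u => phi x y u) t l
  end.

Lemma is_rpd_unique d phi x y t l : is_rpd d phi x y t l -> rpd d phi x y t = l.
Proof. destruct d; simpl; apply is_derive_unique. Qed.

Lemma is_rpd_ex d phi x y t l : is_rpd d phi x y t l -> ex_rpd d phi x y t.
Proof. destruct d; simpl; intros H; eexists; exact H. Qed.

Lemma is_rpd_plus d phi psi x y t l1 l2 : is_rpd d phi x y t l1 -> is_rpd d psi x y t l2 ->
  is_rpd d (fun x y t => phi x y t + psi x y t) x y t (l1 + l2).
Proof. destruct d; simpl; intros H1 H2; apply (is_derive_plus _ _ _ _ _ H1 H2). Qed.

Lemma is_rpd_const d x y t : is_rpd d (fun _ _ _ => 0) x y t 0.
Proof. destruct d; simpl; apply (is_derive_const (K := R_AbsRing) (V := R_NormedModule)). Qed.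

Lemma is_rpd_eq d phi x y t l l' : l = l' -> is_rpd d phi x y t l -> is_rpd d phi x y t l'.
Proof. intros ->; auto. Qed.

Lemma rpd_ext d (phi psi : r3) x y t : (forall x y t, phi x y t = psi x y t) ->
  rpd d phi x y t = rpd d psi x y t.
Proof. intros H; destruct d; simpl; apply Derive_ext; intros; apply H. Qed.

Lemma ex_rpd_ext d (phi psi : r3) x y t : (forall x y t, phi x y t = psi x y t) ->
  ex_rpd d phi x y t -> ex_rpd d psi x y t.
Proof. intros H; destruct d; simpl; apply ex_derive_ext; intros; apply H. Qed.

Definition rDw (w : list dir) (phi : r3) : r3 := fold_right rpd phi w.
Definition reg (phi : r3) : Prop := forall w, C1 (rDw w phi).

Definition wterm := ((R -> R) * list dir)%type.

Fixpoint Jsum (U V W : R -> R) (L : R) (phi : r3) (l : list wterm) (x y t : R) : R :=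
  match l with
  | nil => 0
  | p :: l' => Aint U V W L (fst p) (rDw (snd p) phi) x y t + Jsum U V W L phi l' x y t
  end.

Fixpoint dl (U V : R -> R) (d : dir) (l : list wterm) : list wterm :=
  match l with
  | nil => nil
  | (c, w) :: l' =>
    match d with
    | Dx => (c, Dx :: w) :: (fun s => c s * (/2 * V s), Dt :: w) :: dl U V d l'
    | Dy => (c, Dy :: w) :: (fun s => c s * (-/2 * U s), Dt :: w) :: dl U V d l'
    | Dt => (c, Dt :: w) :: dl U V d l'
    end
  end.

Definition wf (l : list wterm) : Prop := List.Forall (fun p : wterm => forall s : R, continuity_pt (@Datatypes.fst (R -> R) (list dir) p) s) l.

Lemma cont1' (g : R -> R) (s : R) :
  continuity_2d_pt (fun _ v => g v) 0 s -> continuity_pt g s.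
Proof. intros H. exact (cont1_from2 (fun _ => g) s H). Qed.

Lemma wf_dl U V d l : (forall s, continuity_pt U s) -> (forall s, continuity_pt V s) ->
  wf l -> wf (dl U V d l).
Proof.
  intros HU HV. induction l as [|[c w] l IH]; intros H; simpl; [constructor|].
  inversion H; subst. simpl in *.
  destruct d; simpl.
  - apply List.Forall_cons; [exact H2|]. apply List.Forall_cons; [|apply IH; exact H3].
    simpl. intros s. apply cont1'; cbv beta; cont2d.
  - apply List.Forall_cons; [exact H2|]. apply List.Forall_cons; [|apply IH; exact H3].
    simpl. intros s. apply cont1'; cbv beta; cont2d.
  - apply List.Forall_cons; [exact H2|apply IH; exact H3].
Qed.

Lemma Jsum_d U V W L phi l d x y t :
  (forall s, continuity_pt U s) -> (forall s, continuity_pt V s) ->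
  (forall s, continuity_pt W s) -> reg phi -> wf l ->
  is_rpd d (Jsum U V W L phi l) x y t (Jsum U V W L phi (dl U V d l) x y t).
Proof.
  intros HU HV HW Hreg. induction l as [|[c w] l IH]; intros Hwf.
  - apply is_rpd_const.
  - inversion Hwf; subst. simpl in *. specialize (IH H2).
    destruct d.
    + eapply is_rpd_eq; [|apply (is_rpd_plus Dx (Aint U V W L c (rDw w phi)) (Jsum U V W L phi l) x y t _ _ (A_dx U V W L c (rDw w phi) x y t HU HV HW H1 (Hreg w)) IH)].
      simpl. ring.
    + eapply is_rpd_eq; [|apply (is_rpd_plus Dy (Aint U V W L c (rDw w phi)) (Jsum U V W L phi l) x y t _ _ (A_dy U V W L c (rDw w phi) x y t HU HV HW H1 (Hreg w)) IH)].
      simpl. ring.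
    + eapply is_rpd_eq; [|apply (is_rpd_plus Dt (Aint U V W L c (rDw w phi)) (Jsum U V W L phi l) x y t _ _ (A_dt U V W L c (rDw w phi) x y t HU HV HW H1 (Hreg w)) IH)].
      simpl. ring.
Qed.

Lemma Jsum_app U V W L phi l1 l2 x y t :
  Jsum U V W L phi (l1 ++ l2) x y t = Jsum U V W L phi l1 x y t + Jsum U V W L phi l2 x y t.
Proof. induction l1 as [|p l1 IH]; simpl; [ring|rewrite IH; ring]. Qed.

Definition scale (k : R) (l : list wterm) : list wterm :=
  map (fun p => (fun s => k * fst p s, snd p)) l.

Lemma Jsum_scale U V W L phi k l x y t :
  (forall s, continuity_pt U s) -> (forall s, continuity_pt V s) ->
  (forall s, continuity_pt W s) -> reg phi -> wf l ->
  Jsum U V W L phi (scale k l) x y t = k * Jsum U V W L phi l x y t.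
Proof.
  intros HU HV HW Hreg. induction l as [|[c w] l IH]; intros Hwf; simpl; [ring|].
  inversion Hwf; subst. simpl in *. rewrite IH by auto.
  rewrite Rmult_plus_distr_l. f_equal.
  unfold Aint.
  rewrite <- RInt_scalR.
  - apply RInt_ext. intros s _.
    match goal with |- @eq _ ?a ?b => change (@eq R a b) end. ring.
  - apply ex_RInt_A; auto. apply (Hreg w).
Qed.

Lemma wf_app l1 l2 : wf l1 -> wf l2 -> wf (l1 ++ l2).
Proof. intros H1 H2. apply List.Forall_app; split; assumption. Qed.

Lemma wf_scale k l : wf l -> wf (scale k l).
Proof.
  intros H. apply List.Forall_map. eapply List.Forall_impl; [|exact H].
  intros [c w] Hc s. simpl in *. apply cont_pt_mul; [apply cont_pt_const|apply Hc].
Qed.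

Fixpoint Sint (U V W : R -> R) (phi : r3) (l : list wterm) (x y t s : R) : R :=
  match l with
  | nil => 0
  | p :: l' => fst p s * rDw (snd p) phi (x + U s) (y + V s) (t + W s + /2 * (x * V s - y * U s))
               + Sint U V W phi l' x y t s
  end.

Lemma Jsum_RInt U V W L phi l x y t :
  (forall s, continuity_pt U s) -> (forall s, continuity_pt V s) ->
  (forall s, continuity_pt W s) -> reg phi -> wf l ->
  ex_RInt (Sint U V W phi l x y t) 0 L /\
  Jsum U V W L phi l x y t = RInt (Sint U V W phi l x y t) 0 L.
Proof.
  intros HU HV HW Hreg. induction l as [|[c w] l IH]; intros Hwf; simpl.
  - split.
    + apply (ex_RInt_const (V := R_CompleteNormedModule)).
    + rewrite (RInt_const (V := R_CompleteNormedModule)). unfold scal; simpl; unfold mult; simpl. ring.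
  - inversion Hwf; subst. simpl in *. destruct (IH H2) as [Ex Eq].
    assert (E1 := ex_RInt_A U V W L c (rDw w phi) x y t HU HV HW H1 (proj1 (Hreg w))).
    split.
    + apply (ex_RInt_plus (V := R_CompleteNormedModule) _ _ _ _ E1 Ex).
    + rewrite Eq. unfold Aint. rewrite <- (RInt_plusR _ _ _ _ E1 Ex). reflexivity.
Qed.


Definition prj (k : bool) (z : C) : R := if k then fst z else snd z.
Definition Rw (k : bool) (g : fun3) : r3 := fun x y t => prj k (g x y t).

Lemma prj_pd k d g x y t : prj k (pd d g x y t) = rpd d (Rw k g) x y t.
Proof. destruct k, d; reflexivity. Qed.

Lemma Rw_Dw k w f x y t : Rw k (Dw w f) x y t = rDw w (Rw k f) x y t.
Proof.
  revert x y t. induction w as [|d w IH]; intros x y t; [reflexivity|].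
  simpl. change (Rw k (pd d (Dw w f)) x y t = rpd d (rDw w (Rw k f)) x y t).
  unfold Rw at 1. rewrite prj_pd. apply rpd_ext. exact IH.
Qed.

Lemma prj_abs k z : Rabs (prj k z) <= Cmod z.
Proof.
  eapply Rle_trans; [|apply Rmax_Cmod]. destruct k; simpl; [apply Rmax_l|apply Rmax_r].
Qed.

Lemma prj_minus k z1 z2 : prj k (Cminus z1 z2) = prj k z1 - prj k z2.
Proof. destruct k; simpl; ring. Qed.

Lemma cont3_r k g : cont3 g -> cont3r (Rw k g).
Proof.
  intros H x y t eps Heps. destruct (H x y t eps Heps) as [d [Hd Hc]].
  exists d; split; [exact Hd|]. intros x' y' t' H1 H2 H3.
  unfold Rw. rewrite <- prj_minus. eapply Rle_lt_trans; [apply prj_abs|]. apply Hc; auto.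
Qed.

Lemma cont3r_ext (phi psi : r3) : (forall x y t, phi x y t = psi x y t) -> cont3r phi -> cont3r psi.
Proof.
  intros E H x y t eps Heps. destruct (H x y t eps Heps) as [d [Hd Hc]].
  exists d; split; [exact Hd|]. intros. rewrite <- !E. apply Hc; auto.
Qed.

Lemma reg_of_smooth k f : smooth3 f -> reg (Rw k f).
Proof.
  intros Hs w. split; [|split].
  - apply (cont3r_ext (Rw k (Dw w f))); [apply Rw_Dw|]. apply cont3_r, Hs.
  - intros d. apply (cont3r_ext (Rw k (Dw (d :: w) f))); [apply Rw_Dw|]. apply cont3_r, Hs.
  - intros d x y t. apply (ex_rpd_ext d (Rw k (Dw w f))); [apply Rw_Dw|].
    destruct (Hs w) as [_ He]. specialize (He d x y t).
    destruct k, d; destruct He; assumption.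
Qed.

Lemma prj_X k g x y t : prj k (Xop g x y t) = rpd Dx (Rw k g) x y t - y / 2 * rpd Dt (Rw k g) x y t.
Proof. destruct k; unfold Xop; simpl; ring. Qed.
Lemma prj_Y k g x y t : prj k (Yop g x y t) = rpd Dy (Rw k g) x y t + x / 2 * rpd Dt (Rw k g) x y t.
Proof. destruct k; unfold Yop; simpl; ring. Qed.

Lemma Derive_lin (A B : R -> R) (k x : R) : ex_derive A x -> ex_derive B x ->
  Derive (fun u => A u - k * B u) x = Derive A x - k * Derive B x.
Proof.
  intros HA HB. rewrite (Derive_minus A (fun u => k * B u)); [|exact HA|apply ex_derive_scal, HB].
  rewrite Derive_scal. reflexivity.
Qed.
Lemma Derive_lin' (A B : R -> R) (k x : R) : ex_derive A x -> ex_derive B x ->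
  Derive (fun u => A u + k * B u) x = Derive A x + k * Derive B x.
Proof.
  intros HA HB. rewrite (Derive_plus A (fun u => k * B u)); [|exact HA|apply ex_derive_scal, HB].
  rewrite Derive_scal. reflexivity.
Qed.

Lemma subLap_eq k g x y t :
  (forall d d', ex_rpd d (rpd d' (Rw k g)) x y t) ->
  prj k (subLap g x y t) =
  - (rpd Dx (rpd Dx (Rw k g)) x y t - y / 2 * rpd Dx (rpd Dt (Rw k g)) x y t
     - y / 2 * (rpd Dt (rpd Dx (Rw k g)) x y t - y / 2 * rpd Dt (rpd Dt (Rw k g)) x y t)
     + (rpd Dy (rpd Dy (Rw k g)) x y t + x / 2 * rpd Dy (rpd Dt (Rw k g)) x y t
     + x / 2 * (rpd Dt (rpd Dy (Rw k g)) x y t + x / 2 * rpd Dt (rpd Dt (Rw k g)) x y t))).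
Proof.
  intros He.
  assert (E1 : prj k (subLap g x y t) = - (prj k (Xop (Xop g) x y t) + prj k (Yop (Yop g) x y t))).
  { destruct k; unfold subLap; simpl; ring. }
  rewrite E1, prj_X, prj_Y.
  assert (EX : forall x y t, Rw k (Xop g) x y t = rpd Dx (Rw k g) x y t - y / 2 * rpd Dt (Rw k g) x y t).
  { intros; apply prj_X. }
  assert (EY : forall x y t, Rw k (Yop g) x y t = rpd Dy (Rw k g) x y t + x / 2 * rpd Dt (Rw k g) x y t).
  { intros; apply prj_Y. }
  rewrite (rpd_ext Dx _ _ x y t EX), (rpd_ext Dt _ _ x y t EX).
  rewrite (rpd_ext Dy _ _ x y t EY), (rpd_ext Dt _ _ x y t EY).
  simpl.
  rewrite (Derive_lin (fun u => rpd Dx (Rw k g) u y t) (fun u => rpd Dt (Rw k g) u y t))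
    by (apply (He Dx Dx) || apply (He Dx Dt)).
  rewrite (Derive_lin (fun u => rpd Dx (Rw k g) x y u) (fun u => rpd Dt (Rw k g) x y u))
    by (apply (He Dt Dx) || apply (He Dt Dt)).
  rewrite (Derive_lin' (fun u => rpd Dy (Rw k g) x u t) (fun u => rpd Dt (Rw k g) x u t))
    by (apply (He Dy Dy) || apply (He Dy Dt)).
  rewrite (Derive_lin' (fun u => rpd Dy (Rw k g) x y u) (fun u => rpd Dt (Rw k g) x y u))
    by (apply (He Dt Dy) || apply (He Dt Dt)).
  reflexivity.
Qed.


Lemma clairaut_x (phi : r3) : reg phi -> forall x y t,
  rpd Dt (rpd Dx phi) x y t = rpd Dx (rpd Dt phi) x y t.
Proof.
  intros Hreg x y t.
  symmetry.
  apply (Schwarz (fun u v => phi u y v) x t).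
  - exists (mkposreal 1 Rlt_0_1). intros u v _ _. repeat split.
    + exact (proj2 (proj2 (Hreg nil)) Dx u y v).
    + exact (proj2 (proj2 (Hreg nil)) Dt u y v).
    + exact (proj2 (proj2 (Hreg (Dt :: nil))) Dx u y v).
    + exact (proj2 (proj2 (Hreg (Dx :: nil))) Dt u y v).
  - apply (cont_comp2 (rDw (Dx :: Dt :: nil) phi) (fun u _ => u) (fun _ _ => y) (fun _ v => v)).
    + apply (Hreg (Dx :: Dt :: nil)).
    + apply continuity_2d_pt_id1.
    + apply continuity_2d_pt_const.
    + apply continuity_2d_pt_id2.
  - apply (cont_comp2 (rDw (Dt :: Dx :: nil) phi) (fun u _ => u) (fun _ _ => y) (fun _ v => v)).
    + apply (Hreg (Dt :: Dx :: nil)).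
    + apply continuity_2d_pt_id1.
    + apply continuity_2d_pt_const.
    + apply continuity_2d_pt_id2.
Qed.

Lemma clairaut_y (phi : r3) : reg phi -> forall x y t,
  rpd Dt (rpd Dy phi) x y t = rpd Dy (rpd Dt phi) x y t.
Proof.
  intros Hreg x y t.
  symmetry.
  apply (Schwarz (fun u v => phi x u v) y t).
  - exists (mkposreal 1 Rlt_0_1). intros u v _ _. repeat split.
    + exact (proj2 (proj2 (Hreg nil)) Dy x u v).
    + exact (proj2 (proj2 (Hreg nil)) Dt x u v).
    + exact (proj2 (proj2 (Hreg (Dt :: nil))) Dy x u v).
    + exact (proj2 (proj2 (Hreg (Dy :: nil))) Dt x u v).
  - apply (cont_comp2 (rDw (Dy :: Dt :: nil) phi) (fun _ _ => x) (fun u _ => u) (fun _ v => v)).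
    + apply (Hreg (Dy :: Dt :: nil)).
    + apply continuity_2d_pt_const.
    + apply continuity_2d_pt_id1.
    + apply continuity_2d_pt_id2.
  - apply (cont_comp2 (rDw (Dt :: Dy :: nil) phi) (fun _ _ => x) (fun u _ => u) (fun _ v => v)).
    + apply (Hreg (Dt :: Dy :: nil)).
    + apply continuity_2d_pt_const.
    + apply continuity_2d_pt_id1.
    + apply continuity_2d_pt_id2.
Qed.

Lemma Derive_periodic (g : R -> R) (p t : R) : (forall u, g (u + p) = g u) ->
  Derive g (t + p) = Derive g t.
Proof.
  intros Hg. unfold Derive. f_equal. apply Lim_ext. intros h.
  replace (t + p + h) with ((t + h) + p) by ring. rewrite !Hg. reflexivity.
Qed.

Lemma periodic_rpd k f : periodic_t f -> forall (n : nat) x y t,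
  rpd Dt (Rw k f) x y (t + INR n * PI) = rpd Dt (Rw k f) x y t.
Proof.
  intros Hp n. induction n as [|n IH]; intros x y t.
  - simpl. rewrite Rmult_0_l, Rplus_0_r. reflexivity.
  - rewrite S_INR. replace (t + (INR n + 1) * PI) with ((t + INR n * PI) + PI) by ring.
    simpl. rewrite Derive_periodic; [apply IH|].
    intros u. unfold Rw. rewrite Hp. reflexivity.
Qed.

Lemma cont_of_der (g dg : R -> R) : (forall s, is_derive g s (dg s)) -> forall s, continuity_pt g s.
Proof.
  intros H s. apply continuity_pt_filterlim.
  apply (ex_derive_continuous (K := R_AbsRing) (V := R_NormedModule)). eexists; apply H.
Qed.

Ltac Req := match goal with |- @eq _ ?a ?b => change (@eq R a b) end.

Lemma gx_der r s : 0 < r -> is_derive (gamma_x r) s (- sin (s / sqrt r)).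
Proof.
  intros Hr. assert (Hq : 0 < sqrt r) by (apply sqrt_lt_R0; exact Hr).
  unfold gamma_x. auto_derive; [exact I|]. Req. unfold Rdiv. field. lra.
Qed.
Lemma gy_der r s : 0 < r -> is_derive (gamma_y r) s (cos (s / sqrt r)).
Proof.
  intros Hr. assert (Hq : 0 < sqrt r) by (apply sqrt_lt_R0; exact Hr).
  unfold gamma_y. auto_derive; [exact I|]. Req. unfold Rdiv. field. lra.
Qed.
Lemma gt_der r s : is_derive (gamma_t r) s (/ 2 * sqrt r).
Proof. unfold gamma_t. auto_derive; [exact I|]. Req. ring. Qed.
Lemma msin_der r s : 0 < r -> is_derive (fun s => - sin (s / sqrt r)) s (- cos (s / sqrt r) / sqrt r).
Proof.
  intros Hr. assert (Hq : 0 < sqrt r) by (apply sqrt_lt_R0; exact Hr).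
  auto_derive; [exact I|]. Req. unfold Rdiv. field. lra.
Qed.
Lemma cos_der r s : 0 < r -> is_derive (fun s => cos (s / sqrt r)) s (- sin (s / sqrt r) / sqrt r).
Proof.
  intros Hr. assert (Hq : 0 < sqrt r) by (apply sqrt_lt_R0; exact Hr).
  auto_derive; [exact I|]. Req. unfold Rdiv. field. lra.
Qed.


Lemma endpoints (a b : nat) : (0 < a)%nat -> (0 < b)%nat ->
  let r := INR a / INR b in let L := 2 * PI * sqrt (INR a * INR b) in
  gamma_x r L = gamma_x r 0 /\ gamma_y r L = gamma_y r 0 /\
  gamma_t r L = gamma_t r 0 + INR a * PI.
Proof.
  intros Ha Hb r L.
  assert (Hap : 0 < INR a) by (apply lt_0_INR; lia).
  assert (Hbp : 0 < INR b) by (apply lt_0_INR; lia).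
  assert (Hr : 0 < r) by (apply Rdiv_lt_0_compat; lra).
  assert (Hq : 0 < sqrt r) by (apply sqrt_lt_R0; exact Hr).
  assert (Hs : sqrt (INR a * INR b) = sqrt r * INR b).
  { replace (INR a * INR b) with (r * (INR b * INR b)) by (unfold r; field; lra).
    rewrite sqrt_mult_alt by lra. rewrite sqrt_square by lra. reflexivity. }
  assert (HL : L / sqrt r = 0 + 2 * INR b * PI).
  { unfold L. rewrite Hs. field. lra. }
  assert (Hqq : sqrt r * sqrt r = r) by (apply sqrt_sqrt; lra).
  unfold gamma_x, gamma_y, gamma_t. rewrite HL, cos_period, sin_period.
  replace (0 / sqrt r) with 0 by (unfold Rdiv; ring). split; [reflexivity|]. split; [reflexivity|].
  unfold L. rewrite Hs.
  assert (E : / 2 * sqrt r * (2 * PI * (sqrt r * INR b)) = PI * INR b * (sqrt r * sqrt r)) by (field). rewrite E.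
  rewrite Hqq. unfold r. field. lra.
Qed.

Definition l0 : list wterm := (fun _ => 1, nil) :: nil.
Definition L2 U V d d' := dl U V d (dl U V d' l0).
Definition big U V (x y r : R) : list wterm :=
  scale (-1) (L2 U V Dx Dx) ++ scale (y/2) (L2 U V Dx Dt) ++ scale (y/2) (L2 U V Dt Dx)
  ++ scale (-(y/2*(y/2))) (L2 U V Dt Dt) ++ scale (-1) (L2 U V Dy Dy)
  ++ scale (-(x/2)) (L2 U V Dy Dt) ++ scale (-(x/2)) (L2 U V Dt Dy)
  ++ scale (-(x/2*(x/2))) (L2 U V Dt Dt) ++ scale r (L2 U V Dt Dt).

Lemma wf_l0 : wf l0.
Proof. constructor; [intros s; apply cont_pt_const|constructor]. Qed.

Lemma wf_L2 U V d d' : (forall s, continuity_pt U s) -> (forall s, continuity_pt V s) ->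
  wf (L2 U V d d').
Proof. intros; unfold L2; apply wf_dl; auto; apply wf_dl; auto; apply wf_l0. Qed.

Lemma wf_big U V x y r : (forall s, continuity_pt U s) -> (forall s, continuity_pt V s) ->
  wf (big U V x y r).
Proof.
  intros HU HV. unfold big.
  repeat (apply wf_app; [apply wf_scale, wf_L2; auto|]). apply wf_scale, wf_L2; auto.
Qed.

Lemma rhs_gen U V W L phi (F : fun3) k r x y t :
  (forall s, continuity_pt U s) -> (forall s, continuity_pt V s) ->
  (forall s, continuity_pt W s) -> reg phi ->
  (forall x y t, Rw k F x y t = Jsum U V W L phi l0 x y t) ->
  prj k (box r F x y t) = Jsum U V W L phi (big U V x y r) x y t.
Proof.
  intros HU HV HW Hreg HF.
  assert (D1 : forall d x y t, rpd d (Rw k F) x y t = Jsum U V W L phi (dl U V d l0) x y t).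
  { intros d x0 y0 t0. rewrite (rpd_ext d _ _ x0 y0 t0 HF).
    apply is_rpd_unique, Jsum_d; auto. apply wf_l0. }
  assert (D2 : forall d d' x y t, rpd d (rpd d' (Rw k F)) x y t = Jsum U V W L phi (L2 U V d d') x y t).
  { intros d d' x0 y0 t0. rewrite (rpd_ext d _ _ x0 y0 t0 (D1 d')).
    apply is_rpd_unique, Jsum_d; auto. apply wf_dl; auto. apply wf_l0. }
  assert (Ex : forall d d', ex_rpd d (rpd d' (Rw k F)) x y t).
  { intros d d'. apply (ex_rpd_ext d (Jsum U V W L phi (dl U V d' l0))).
    - intros; symmetry; apply D1.
    - eapply is_rpd_ex. apply Jsum_d; auto. apply wf_dl; auto. apply wf_l0. }
  assert (Eb : prj k (box r F x y t) = prj k (subLap F x y t) + r * rpd Dt (rpd Dt (Rw k F)) x y t).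
  { assert (E : prj k (Top (Top F) x y t) = rpd Dt (rpd Dt (Rw k F)) x y t).
    { unfold Top. rewrite prj_pd. apply rpd_ext. intros; apply prj_pd. }
    rewrite <- E. destruct k; unfold box; simpl; ring. }
  rewrite Eb, subLap_eq by exact Ex. rewrite !D2.
  unfold big. rewrite !Jsum_app.
  rewrite !Jsum_scale by (auto; apply wf_L2; auto).
  ring.
Qed.


Lemma C_ext (z1 z2 : C) : (forall k, prj k z1 = prj k z2) -> z1 = z2.
Proof.
  destruct z1 as [a1 b1], z2 as [a2 b2]; intros H.
  assert (H1 := H true); assert (H2 := H false); simpl in *; subst; reflexivity.
Qed.

Lemma G_eq a b f k x y t :
  Rw k (I_op a b f) x y t =
  Jsum (gamma_x (INR a / INR b)) (gamma_y (INR a / INR b)) (gamma_t (INR a / INR b)) (2 * PI * sqrt (INR a * INR b)) (Rw k f) l0 x y t.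
Proof.
  unfold l0, Jsum. simpl fst; simpl snd. rewrite Rplus_0_r.
  unfold Aint, Rw, I_op, CRInt, rDw, f_at_prod. simpl fold_right.
  destruct k; simpl prj.
  - apply (RInt_ext (V := R_CompleteNormedModule)). intros. Req. ring.
  - apply (RInt_ext (V := R_CompleteNormedModule)). intros. Req. ring.
Qed.

Theorem mainTheorem12 (a b : nat) (f : R -> R -> R -> C) :
  (0 < a)%nat -> (0 < b)%nat -> Nat.gcd a b = 1%nat ->
  Schwartz_Hbar f ->
  forall x y t : R,
    I_op a b (subLap f) x y t = box (INR a / INR b) (I_op a b f) x y t.
Proof.
  intros Ha Hb _ [Hsm [Hper _]] x y t.
  apply C_ext. intros k.
  assert (Hreg := reg_of_smooth k f Hsm).
  assert (Hap : 0 < INR a) by (apply lt_0_INR; lia).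
  assert (Hbp : 0 < INR b) by (apply lt_0_INR; lia).
  assert (Hr : 0 < INR a / INR b) by (apply Rdiv_lt_0_compat; lra).
  assert (Hq : 0 < sqrt (INR a / INR b)) by (apply sqrt_lt_R0; exact Hr).
  destruct (endpoints a b Ha Hb) as [EX [EY ET]].
  assert (HU := cont_of_der _ _ (fun s => gx_der _ s Hr)).
  assert (HV := cont_of_der _ _ (fun s => gy_der _ s Hr)).
  assert (HW := cont_of_der _ _ (fun s => gt_der (INR a / INR b) s)).
  assert (HUp := cont_of_der _ _ (fun s => msin_der _ s Hr)).
  assert (HVp := cont_of_der _ _ (fun s => cos_der _ s Hr)).
  assert (HWp : forall s, continuity_pt (fun _ => / 2 * sqrt (INR a / INR b)) s) by (intros; apply cont_pt_const).
  rewrite (rhs_gen _ _ _ _ _ _ _ _ _ _ _ HU HV HW Hreg (fun x y t => G_eq a b f k x y t)).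
  rewrite (proj2 (Jsum_RInt _ _ _ _ _ _ _ _ _ HU HV HW Hreg (wf_big _ _ _ _ _ HU HV))).
  set (r := INR a / INR b) in *.
  set (L := 2 * PI * sqrt (INR a * INR b)) in *.
  set (phi := Rw k f) in *.
  set (P1 := fun s => x + gamma_x r s).
  set (P2 := fun s => y + gamma_y r s).
  set (P3 := fun s => t + gamma_t r s + / 2 * (x * gamma_y r s - y * gamma_x r s)).
  set (Up := fun s => - sin (s / sqrt r)).
  set (Vp := fun s => cos (s / sqrt r)).
  set (Wp := fun _ : R => / 2 * sqrt r).
  set (H := fun s => rpd Dt phi (P1 s) (P2 s) (P3 s)).
  set (corr := fun s => rpd Dx (rpd Dt phi) (P1 s) (P2 s) (P3 s) * Up s
     + rpd Dy (rpd Dt phi) (P1 s) (P2 s) (P3 s) * Vp s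
     + rpd Dt (rpd Dt phi) (P1 s) (P2 s) (P3 s) * (Wp s + / 2 * (x * Vp s - y * Up s))).
  assert (Hder : forall s, is_derive H s (corr s)).
  { intros s. unfold H, corr.
    apply (chain3 (rpd Dt phi) P1 P2 P3 s); [exact (Hreg (Dt :: nil))| | |].
    - unfold P1, Up, gamma_x. auto_derive; [exact I|]. Req. unfold Rdiv. field. lra.
    - unfold P2, Vp, gamma_y. auto_derive; [exact I|]. Req. unfold Rdiv. field. lra.
    - unfold P3, Wp, Vp, Up, gamma_t, gamma_x, gamma_y. auto_derive; [repeat split|]. Req. unfold Rdiv. field. lra. }
  assert (HP1 : forall s, continuity_pt P1 s).
  { apply (cont_of_der _ Up). intros s. unfold P1, Up, gamma_x. auto_derive; [exact I|]. Req. unfold Rdiv. field. lra. }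
  assert (HP2 : forall s, continuity_pt P2 s).
  { apply (cont_of_der _ Vp). intros s. unfold P2, Vp, gamma_y. auto_derive; [exact I|]. Req. unfold Rdiv. field. lra. }
  assert (HP3 : forall s, continuity_pt P3 s).
  { apply (cont_of_der _ (fun s => Wp s + / 2 * (x * Vp s - y * Up s))). intros s.
    unfold P3, Wp, Vp, Up, gamma_t, gamma_x, gamma_y. auto_derive; [repeat split|]. Req. unfold Rdiv. field. lra. }
  assert (Hcw : forall w s, continuity_2d_pt (fun _ s => rDw w phi (P1 s) (P2 s) (P3 s)) 0 s).
  { intros w s. apply (cont_comp2 (rDw w phi) (fun _ s => P1 s) (fun _ s => P2 s) (fun _ s => P3 s)).
    - apply (Hreg w).
    - apply cont_v, HP1.
    - apply cont_v, HP2.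
    - apply cont_v, HP3. }
  assert (Hcorr_cont : forall s, continuous corr s).
  { intros s. apply (cont2d_1d (fun _ s => corr s) 0 s). unfold corr.
    apply continuity_2d_pt_plus; [apply continuity_2d_pt_plus|].
    - apply continuity_2d_pt_mult; [apply (Hcw (Dx :: Dt :: nil))|]. apply cont_v, HUp.
    - apply continuity_2d_pt_mult; [apply (Hcw (Dy :: Dt :: nil))|]. apply cont_v, HVp.
    - apply continuity_2d_pt_mult; [apply (Hcw (Dt :: Dt :: nil))|]. 
      apply continuity_2d_pt_plus; [unfold Wp; cont2d|].
      apply continuity_2d_pt_mult; [cont2d|].
      apply continuity_2d_pt_minus; (apply continuity_2d_pt_mult; [cont2d|]).
      + apply cont_v, HVp.
      + apply cont_v, HUp. }
  assert (Hint : is_RInt corr 0 L (minus (H L) (H 0))).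
  { apply (is_RInt_derive (V := R_CompleteNormedModule) H corr); intros s _; [apply Hder|apply Hcorr_cont]. }
  assert (HL0 : H L = H 0).
  { unfold H, P1, P2, P3. rewrite EX, EY, ET.
    replace (t + (gamma_t r 0 + INR a * PI) + / 2 * (x * gamma_y r 0 - y * gamma_x r 0))
      with ((t + gamma_t r 0 + / 2 * (x * gamma_y r 0 - y * gamma_x r 0)) + INR a * PI) by ring.
    unfold phi. apply periodic_rpd; exact Hper. }
  assert (Ecorr : RInt corr 0 L = 0).
  { rewrite (is_RInt_unique _ _ _ _ Hint), HL0. unfold minus, plus, opp; simpl. ring. }
  assert (Excorr : ex_RInt corr 0 L) by (eexists; exact Hint).
  transitivity (RInt (fun s => prj k (subLap f (P1 s) (P2 s) (P3 s))) 0 L).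
  { destruct k; reflexivity. }
  assert (Hpt : forall s, prj k (subLap f (P1 s) (P2 s) (P3 s)) =
     Sint (gamma_x r) (gamma_y r) (gamma_t r) phi (big (gamma_x r) (gamma_y r) x y r) x y t s
     + (-2 * sqrt r) * corr s).
  { intros s.
    rewrite (subLap_eq k f) by (intros d d'; exact (proj2 (proj2 (Hreg (d' :: nil))) d _ _ _)).
    change (Rw k f) with phi.
    unfold big, L2, l0. cbn [Sint app scale map dl fst snd rDw fold_right].
    unfold corr, Up, Vp, Wp, P1, P2, P3.
    rewrite !(clairaut_x phi Hreg), !(clairaut_y phi Hreg).
    set (T0 := t + gamma_t r s + / 2 * (x * gamma_y r s - y * gamma_x r s)).
    set (X0 := x + gamma_x r s). set (Y0 := y + gamma_y r s).
    set (axx := rpd Dx (rpd Dx phi) X0 Y0 T0).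
    set (axt := rpd Dx (rpd Dt phi) X0 Y0 T0).
    set (att := rpd Dt (rpd Dt phi) X0 Y0 T0).
    set (ayy := rpd Dy (rpd Dy phi) X0 Y0 T0).
    set (ayt := rpd Dy (rpd Dt phi) X0 Y0 T0).
    unfold X0, Y0. unfold gamma_x, gamma_y.
    set (q := sqrt r) in *. set (co := cos (s / q)). set (si := sin (s / q)).
    assert (E1 : q * q = r) by (unfold q; apply sqrt_sqrt; lra).
    rewrite <- E1. Req. field. }
  rewrite (RInt_ext (V := R_CompleteNormedModule) _ _ _ _ (fun s _ => Hpt s)).
  assert (ExS := proj1 (Jsum_RInt _ _ _ L _ _ x y t HU HV HW Hreg (wf_big _ _ x y r HU HV))).
  assert (ExC : ex_RInt (fun s => -2 * sqrt r * corr s) 0 L).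
  { apply (ex_RInt_scal (V := R_CompleteNormedModule)). exact Excorr. }
  rewrite (RInt_plusR _ _ _ _ ExS ExC).
  rewrite (RInt_scalR _ _ _ _ Excorr). rewrite Ecorr. ring.
Qed.
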